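(* Let $(\mathfrak g_0,\mathfrak q)$ be a parabolic $CR$ algebra and $(\vartheta,\mathfrak h_0)$ an adapted Cartan pair, with root system $\mathcal R$ and parabolic set $\mathcal Q$ of $\mathfrak q$. For a fit Weyl chamber $C$, with order $\prec$, basis $\mathcal B$ and $\Phi=\mathcal Q^n\cap\mathcal B$, the following two conditions are equivalent: (a) if $\alpha\in\mathcal R_{\rm cpx}$, $\alpha\succ0$ and $\bar\alpha\prec0$, then $\alpha$ and $-\bar\alpha$ both belong to $\mathcal Q^n$; (b) $\bar\alpha\succ0$ for all $\alpha\in\mathcal B\setminus(\Phi\cup\mathcal R_{\rm im})$. Likewise the following are equivalent: (c) if $\alpha\in\mathcal R_{\rm cpx}$, $\alpha\succ0$ and $\bar\alpha\succ0$, then $\alpha$ and $\bar\alpha$ both belong to $\mathcal Q^n$; (d) $\bar\alpha\prec0$ for all $\alpha\in\mathcal B\setminus(\Phi\cup\mathcal R_{\rm re})$. Moreover there exists a fit Weyl chamber $C'$ satisfying (a) and (b), and there exists a fit Weyl chamber $C''$ satisfying (c) and (d).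
   Context: $\mathfrak g_0$ is a real semisimple Lie algebra with complexification $\mathfrak g$; $Z\mapsto\bar Z$ conjugation w.r.t. $\mathfrak g_0$; $\mathfrak q$ a complex parabolic subalgebra of $\mathfrak g$. An adapted Cartan pair is a Cartan involution $\vartheta$ of $\mathfrak g_0$ with a $\vartheta$-invariant Cartan subalgebra $\mathfrak h_0$ of $\mathfrak g_0$ contained in $\mathfrak q\cap\mathfrak g_0$. $\mathcal R$ is the root system of $\mathfrak g$ w.r.t. $\mathfrak h=\mathfrak h_0^{\mathbb C}$ (real on $\mathfrak h_{\mathbb R}=(\mathfrak h_0\cap\mathfrak p_0)\oplus i(\mathfrak h_0\cap\mathfrak k_0)$); $\bar\alpha$ is the root with $\mathfrak g^{\bar\alpha}=\overline{\mathfrak g^\alpha}$; $\mathcal R_{\rm re}=\{\bar\alpha=\alpha\}$, $\mathcal R_{\rm im}=\{\bar\alpha=-\alpha\}$, $\mathcal R_{\rm cpx}=\{\bar\alpha\neq\pm\alpha\}$. $\mathcal Q=\{\alpha:\mathfrak g^\alpha\subset\mathfrak q\}$, and $\mathcal Q^n=\{\alpha\in\mathcal Q: -\alpha\notin\mathcal Q\}$ (roots of the nilradical). A Weyl chamber $C$ (with induced order $\prec$ and basis $\mathcal B$ of simple positive roots) is fit for $\mathcal Q$ if every $C$-positive root lies in $\mathcal Q$. *)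

(* Defs.v *)
From HB Require Import structures.
From mathcomp Require Import all_boot all_order all_algebra.
From mathcomp Require Import reals.
Set Implicit Arguments. Unset Strict Implicit. Unset Printing Implicit Defensive.
Import Order.TTheory GRing.Theory Num.Theory.
Local Open Scope ring_scope.

Section RootData.
Variables (R : realType) (n : nat).
Local Notation V := 'rV[R]_n.

(* Standard (Killing-form) inner product on h_R (orthonormal coordinates);
   roots are identified with vectors of h_R via this inner product. *)
Definition dotv (u v : V) : R := (u *m v^T) 0 0.

Definition root_system (Rt : seq V) : Prop :=
  [/\ (0 : V) \notin Rt,
      (forall v : V, (forall a, a \in Rt -> dotv a v = 0) -> v = 0),
      (forall a b, a \in Rt -> b \in Rt ->
          (2 * dotv a b / dotv a a) \is a Num.int /\
          b - (2 * dotv a b / dotv a a) *: a \in Rt) &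
      (forall a (c : R), a \in Rt -> c *: a \in Rt -> c = 1 \/ c = -1)].

(* The conjugation Z |-> bar Z w.r.t. g_0 induces on h_R the linear
   isometric involution S; bar alpha = alpha S. *)
Definition conj_invol (Rt : seq V) (S : 'M[R]_n) : Prop :=
  [/\ S *m S = 1%:M, S *m S^T = 1%:M &
      (forall a, a \in Rt -> a *m S \in Rt)].

Definition rbar (S : 'M[R]_n) (a : V) : V := a *m S.

Definition is_real_root (S : 'M[R]_n) (a : V) := rbar S a = a.
Definition is_imag_root (S : 'M[R]_n) (a : V) := rbar S a = - a.
Definition is_cpx_root (S : 'M[R]_n) (a : V) :=
  rbar S a <> a /\ rbar S a <> - a.

(* A Weyl chamber is represented by a regular element H of it;
   alpha >- 0 iff alpha(H) > 0. *)
Definition regular (Rt : seq V) (H : V) := forall a, a \in Rt -> dotv a H != 0.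
Definition rpos (H : V) (a : V) := 0 < dotv a H.
Definition rneg (H : V) (a : V) := dotv a H < 0.

(* Q is the parabolic set of a parabolic subalgebra q containing h:
   closed under addition and containing a positive system. *)
Definition parabolic_set (Rt Q : seq V) : Prop :=
  [/\ (forall a, a \in Q -> a \in Rt),
      (forall a b, a \in Q -> b \in Q -> a + b \in Rt -> a + b \in Q) &
      exists H, regular Rt H /\ (forall a, a \in Rt -> rpos H a -> a \in Q)].

Definition in_Qn (Q : seq V) (a : V) := a \in Q /\ - a \notin Q.

Definition fit (Rt Q : seq V) (H : V) :=
  regular Rt H /\ (forall a, a \in Rt -> rpos H a -> a \in Q).

Definition simple_root (Rt : seq V) (H : V) (a : V) :=
  [/\ a \in Rt, rpos H a &
      ~ (exists b c, [/\ b \in Rt, c \in Rt, rpos H b, rpos H c & a = b + c])].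

Definition cond_a (Rt Q : seq V) (S : 'M[R]_n) (H : V) :=
  forall a, a \in Rt -> is_cpx_root S a -> rpos H a -> rneg H (rbar S a) ->
    in_Qn Q a /\ in_Qn Q (- rbar S a).

Definition cond_b (Rt Q : seq V) (S : 'M[R]_n) (H : V) :=
  forall a, simple_root Rt H a -> ~ in_Qn Q a -> ~ is_imag_root S a ->
    rpos H (rbar S a).

Definition cond_c (Rt Q : seq V) (S : 'M[R]_n) (H : V) :=
  forall a, a \in Rt -> is_cpx_root S a -> rpos H a -> rpos H (rbar S a) ->
    in_Qn Q a /\ in_Qn Q (rbar S a).

Definition cond_d (Rt Q : seq V) (S : 'M[R]_n) (H : V) :=
  forall a, simple_root Rt H a -> ~ in_Qn Q a -> ~ is_real_root S a ->
    rneg H (rbar S a).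

End RootData.

(* Main.v *)
Require Import Defs.
From mathcomp Require Import all_boot all_order all_algebra.
From mathcomp Require Import reals.
From Stdlib Require Import Classical.
From mathcomp Require Import ring lra.
Set Implicit Arguments. Unset Strict Implicit. Unset Printing Implicit Defensive.
Import Order.TTheory GRing.Theory Num.Theory.
Local Open Scope ring_scope.

Lemma count_leP (T : eqType) (s : seq T) (p1 p2 : pred T) :
  (forall y, y \in s -> p1 y -> p2 y) -> (count p1 s <= count p2 s)%N.
Proof.
elim: s => [//|y s IH] H12 /=.
have IH' := IH (fun z (zs : z \in s) => H12 z (etrans (congr1 (orb _) zs) (orbT _))).
by case: (p1 y) (H12 y (mem_head _ _)) => [->//|_]; case: (p2 y) => //=; rewrite ?add0n ?add1n ?leqW // ltnS.
Qed.

Lemma count_ltP (T : eqType) (s : seq T) (p1 p2 : pred T) x :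
  (forall y, y \in s -> p1 y -> p2 y) -> x \in s -> p2 x -> ~~ p1 x ->
  (count p1 s < count p2 s)%N.
Proof.
elim: s => [//|y s IH] H12; rewrite inE => /orP [/eqP <-|xs] p2x p1x /=.
  rewrite (negbTE p1x) p2x add0n add1n ltnS count_leP // => z zs; apply: H12.
  by rewrite inE zs orbT.
have := IH (fun z (zs : z \in s) => H12 z (etrans (congr1 (orb _) zs) (orbT _))) xs p2x p1x.
case: (p1 y) (H12 y (mem_head _ _)) => [->//|_].
by rewrite add0n => h; apply: leq_trans h (leq_addl _ _).
Qed.

Section Basics.
Variables (R : realType) (n : nat).
Local Notation V := 'rV[R]_n.

Lemma dotvE (u v : V) : dotv u v = \sum_j u 0 j * v 0 j.
Proof. by rewrite /dotv !mxE; apply: eq_bigr => j _; rewrite mxE. Qed.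

Lemma dotvC (u v : V) : dotv u v = dotv v u.
Proof. by rewrite !dotvE; apply: eq_bigr => j _; rewrite mulrC. Qed.

Lemma dotvDl (u v w : V) : dotv (u + v) w = dotv u w + dotv v w.
Proof. by rewrite !dotvE -big_split; apply: eq_bigr => j _; rewrite mxE mulrDl. Qed.

Lemma dotvZl (c : R) (u w : V) : dotv (c *: u) w = c * dotv u w.
Proof. by rewrite !dotvE mulr_sumr; apply: eq_bigr => j _; rewrite mxE mulrA. Qed.

Lemma dotvNl (u w : V) : dotv (- u) w = - dotv u w.
Proof. by rewrite -scaleN1r dotvZl mulN1r. Qed.

Lemma dotvBl (u v w : V) : dotv (u - v) w = dotv u w - dotv v w.
Proof. by rewrite dotvDl dotvNl. Qed.

Lemma dotv0l (w : V) : dotv 0 w = 0.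
Proof. by rewrite -(scale0r (0 : V)) dotvZl mul0r. Qed.

Lemma dotvDr (u v w : V) : dotv w (u + v) = dotv w u + dotv w v.
Proof. by rewrite !(dotvC w) dotvDl. Qed.
Lemma dotvZr (c : R) (u w : V) : dotv w (c *: u) = c * dotv w u.
Proof. by rewrite !(dotvC w) dotvZl. Qed.
Lemma dotvNr (u w : V) : dotv w (- u) = - dotv w u.
Proof. by rewrite !(dotvC w) dotvNl. Qed.
Lemma dotvBr (u v w : V) : dotv w (u - v) = dotv w u - dotv w v.
Proof. by rewrite dotvDr dotvNr. Qed.

Lemma dotv_suml (l : seq V) w : dotv (\sum_(x <- l) x) w = \sum_(x <- l) dotv x w.
Proof. by elim: l => [|x l IH]; rewrite ?big_nil ?dotv0l // !big_cons dotvDl IH. Qed.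

Lemma dotv_ge0 (v : V) : 0 <= dotv v v.
Proof. by rewrite dotvE; apply: sumr_ge0 => j _; rewrite -expr2 sqr_ge0. Qed.

Lemma dotv_eq0 (v : V) : dotv v v = 0 -> v = 0.
Proof.
rewrite dotvE => h; apply/rowP => j; rewrite mxE.
have hp : forall i, true -> 0 <= v 0 i * v 0 i by move=> i _; rewrite -expr2 sqr_ge0.
have := psumr_eq0P hp h (i := j) isT.
by move=> /eqP; rewrite mulf_eq0 orbb => /eqP.
Qed.

End Basics.

Section RootSys.
Variables (R : realType) (n : nat) (Rt : seq 'rV[R]_n).
Hypothesis RS : root_system Rt.
Local Notation V := 'rV[R]_n.

Lemma rt_nz a : a \in Rt -> a != 0.
Proof. by case: RS => h0 _ _ _ aR; apply: contraNneq h0 => <-. Qed.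

Lemma rt_dot_gt0 a : a \in Rt -> 0 < dotv a a.
Proof.
move=> aR; rewrite lt_def dotv_ge0 andbT; apply/eqP => /dotv_eq0 h.
by move: (rt_nz aR); rewrite h eqxx.
Qed.

Lemma rt_refl a b : a \in Rt -> b \in Rt ->
  (2 * dotv a b / dotv a a) \is a Num.int /\
  b - (2 * dotv a b / dotv a a) *: a \in Rt.
Proof. by case: RS => _ _ h _; apply: h. Qed.

Lemma rt_neg a : a \in Rt -> - a \in Rt.
Proof.
move=> aR; have [_] := rt_refl aR aR.
have h2 : 2 * dotv a a / dotv a a = 2 by rewrite mulfK // gt_eqF // rt_dot_gt0.
by rewrite h2 scaler_nat mulr2n opprD addrA subrr add0r.
Qed.

Lemma int_ge2 (x : R) : x \is a Num.int -> 0 < x -> x != 1 -> 2 <= x.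
Proof.
move=> xi x0 x1; have : x \is a Num.nat by rewrite -intrEge0 // ltW.
move=> /natrP [k kE]; rewrite kE in x0 x1 *.
apply: (@le_trans _ _ 2%:R) => //; rewrite ler_nat; move: x0 x1; rewrite ltr0n.
by case: k {kE} => [|[|k]] //; rewrite eqxx.
Qed.

Lemma rt_diff a b : a \in Rt -> b \in Rt -> 0 < dotv a b -> a != b -> a - b \in Rt.
Proof.
move=> aR bR dpos ab.
have aa0 := rt_dot_gt0 aR; have bb0 := rt_dot_gt0 bR.
have [n1i n1R] := rt_refl aR bR; have [n2i n2R] := rt_refl bR aR.
rewrite (dotvC b a) in n2i n2R.
have n1p : 0 < 2 * dotv a b / dotv a a by rewrite divr_gt0 // mulr_gt0.
have n2p : 0 < 2 * dotv a b / dotv b b by rewrite divr_gt0 // mulr_gt0.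
have [/eqP e2|ne2] := boolP (2 * dotv a b / dotv b b == 1).
  by rewrite e2 scale1r in n2R.
have [/eqP e1|ne1] := boolP (2 * dotv a b / dotv a a == 1).
  by rewrite e1 scale1r in n1R; rewrite -opprB rt_neg.
have := int_ge2 n1i n1p ne1; rewrite ler_pdivlMr // => h1.
have := int_ge2 n2i n2p ne2; rewrite ler_pdivlMr // => h2.
have le1 : dotv a a <= dotv a b by lra.
have le2 : dotv b b <= dotv a b by lra.
have le3 : dotv a a * dotv b b <= dotv a b * dotv a b.
  by apply: ler_pM => //; apply: ltW.
pose v := dotv a a *: b - dotv a b *: a.
have hv : dotv v v = dotv a a * (dotv a a * dotv b b - dotv a b * dotv a b).
  rewrite /v dotvBl !dotvBr !dotvZl !dotvZr (dotvC b a); ring.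
have v0 : v = 0.
  apply: dotv_eq0; apply/eqP; rewrite eq_le dotv_ge0 andbT hv.
  by rewrite pmulr_rle0 // subr_le0.
have bE : b = (dotv a b / dotv a a) *: a.
  move/eqP: v0; rewrite subr_eq0 => /eqP h.
  by rewrite mulrC -scalerA -h scalerA mulVf ?scale1r // gt_eqF.
case: RS => _ _ _ /(_ a (dotv a b / dotv a a) aR).
rewrite -bE => /(_ bR) [c1|cm1].
  by move: ab; rewrite bE c1 scale1r eqxx.
have h := divr_gt0 dpos aa0; rewrite cm1 in h; lra.
Qed.

End RootSys.

Lemma dotv_sumr (R : realType) (n : nat) (l : seq 'rV[R]_n) w :
  dotv w (\sum_(x <- l) x) = \sum_(x <- l) dotv w x.
Proof. by rewrite dotvC dotv_suml; apply: eq_bigr => x _; rewrite dotvC. Qed.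

Section Chamber.
Variables (R : realType) (n : nat) (Rt : seq 'rV[R]_n) (H : 'rV[R]_n).
Hypothesis RS : root_system Rt.
Hypothesis reg : regular Rt H.
Local Notation V := 'rV[R]_n.
Local Notation simple := (simple_root Rt H).

Lemma sign_rt a : a \in Rt -> 0 < dotv a H \/ dotv a H < 0.
Proof. by move=> aR; have := lt_total (reg aR) => /orP [h|h]; [right|left]. Qed.

Lemma simple_in a : simple a -> a \in Rt. Proof. by case. Qed.
Lemma simple_pos a : simple a -> 0 < dotv a H. Proof. by case. Qed.

Lemma simple_dot a b : simple a -> simple b -> a != b -> dotv a b <= 0.
Proof.
move=> sa sb ab; rewrite leNgt; apply/negP => dp.
have abR := rt_diff RS (simple_in sa) (simple_in sb) dp ab.
case: (sign_rt abR) => h.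
  case: sa => _ _; apply; exists b, (a - b); split => //; first exact: simple_in.
  - exact: simple_pos.
  - by rewrite addrC subrK.
case: sb => _ _; apply; exists a, (b - a); split => //; first exact: simple_in.
- by rewrite -opprB rt_neg.
- exact: simple_pos.
- by rewrite /rpos -opprB dotvNl oppr_gt0.
- by rewrite addrC subrK.
Qed.

Lemma decomp (P : V -> Prop) :
  (forall b c, b \in Rt -> c \in Rt -> rpos H b -> rpos H c -> P (b + c) -> P b /\ P c) ->
  forall N a, (count (fun b => (dotv b H < dotv a H)%R) Rt < N)%N ->
  a \in Rt -> 0 < dotv a H -> P a ->
  exists l, (forall x, x \in l -> simple x /\ P x) /\ a = \sum_(x <- l) x.
Proof.
move=> Pcl; elim=> [//|N IH] a cN aR apos Pa.
have [sa|nsa] := classic (simple a).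
  by exists [:: a]; split; [move=> x; rewrite inE => /eqP -> | rewrite big_seq1].
have [b [c [bR cR bp cp abc]]] :
    exists b c, [/\ b \in Rt, c \in Rt, rpos H b, rpos H c & a = b + c].
  by apply: NNPP => hne; apply: nsa; split.
have [Pb Pc] : P b /\ P c by apply: Pcl => //; rewrite -abc.
have hlt x y : x \in Rt -> rpos H y -> a = x + y ->
    (count (fun b0 => (dotv b0 H < dotv x H)%R) Rt < N)%N.
  move=> xR yp axy; rewrite -ltnS; apply: leq_trans cN.
  apply: (count_ltP (x := x)) => //.
  - move=> z _ /= hz; apply: lt_trans hz _; rewrite axy dotvDl ltrDl; exact: yp.
  - by rewrite /= axy dotvDl ltrDl.
  - by rewrite /= ltxx.
have [lb [hb eb]] := IH b (hlt b c bR cp abc) bR bp Pb.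
have [lc [hc ec]] := IH c (hlt c b cR bp (etrans abc (addrC b c))) cR cp Pc.
exists (lb ++ lc); split; last by rewrite big_cat /= -eb -ec.
by move=> x; rewrite mem_cat => /orP [/hb|/hc].
Qed.

Lemma decomp0 a : a \in Rt -> 0 < dotv a H ->
  exists l, (forall x, x \in l -> simple x) /\ a = \sum_(x <- l) x.
Proof.
move=> aR ap.
have [l [hl e]] := @decomp (fun _ => True) (fun _ _ _ _ _ _ _ => conj I I) _ a (ltnSn _) aR ap I.
by exists l; split => // x /hl [].
Qed.

Lemma li_core (l1 l2 : seq V) :
  (forall x, x \in l1 -> simple x) -> (forall x, x \in l2 -> simple x) ->
  (forall x, x \in l1 -> x \notin l2) ->
  \sum_(x <- l1) x = \sum_(x <- l2) x -> l1 = [::].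
Proof.
move=> s1 s2 dis e.
have hle : dotv (\sum_(x <- l1) x) (\sum_(x <- l2) x) <= 0.
  rewrite dotv_suml big_seq; apply: sumr_le0 => x xl.
  rewrite dotv_sumr big_seq; apply: sumr_le0 => y yl.
  apply: simple_dot; [exact: s1|exact: s2|].
  by apply: contraNneq (dis x xl) => ->.
have p0 : \sum_(x <- l1) x = 0.
  apply: dotv_eq0; apply/eqP; rewrite eq_le dotv_ge0 andbT.
  by rewrite {2}e.
case: l1 s1 {dis e hle} p0 => [//|x l] s1 p0.
have h : dotv (\sum_(y <- x :: l) y) H = 0 by rewrite p0 dotv0l.
rewrite dotv_suml big_cons in h.
have hx : 0 < dotv x H by apply: simple_pos; apply: s1; rewrite inE eqxx.
have hl : 0 <= \sum_(y <- l) dotv y H.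
  rewrite big_seq; apply: sumr_ge0 => y yl; apply: ltW; apply: simple_pos.
  by apply: s1; rewrite inE yl orbT.
clear p0; exfalso; lra.
Qed.

Lemma li_perm k (l1 l2 : seq V) : (size l1 < k)%N ->
  (forall x, x \in l1 -> simple x) -> (forall x, x \in l2 -> simple x) ->
  \sum_(x <- l1) x = \sum_(x <- l2) x -> perm_eq l1 l2.
Proof.
elim: k l1 l2 => [//|k IH] l1 l2 sz s1 s2 e.
have [/hasP [x x1 x2]|/hasPn dis] := boolP (has (fun x => x \in l2) l1).
  have p1 := perm_to_rem x1; have p2 := perm_to_rem x2.
  have e' : \sum_(y <- rem x l1) y = \sum_(y <- rem x l2) y.
    move: e; rewrite (perm_big _ p1) (perm_big _ p2) !big_cons; exact: addrI.
  have hp : perm_eq (rem x l1) (rem x l2).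
    apply: IH => //.
    - have hs : (0 < size l1)%N by case: (l1) x1.
      by rewrite size_rem //; move: sz hs; case: (size l1).
    - by move=> y /mem_rem; apply: s1.
    - by move=> y /mem_rem; apply: s2.
  apply: (perm_trans p1); apply: (@perm_trans _ (x :: rem x l2)); last by rewrite perm_sym.
  by rewrite perm_cons.
have l10 := li_core s1 s2 dis e.
rewrite l10 big_nil in e.
have l20 : l2 = [::].
  apply: (li_core (l1 := l2) (l2 := [::])) => //.
  all: try by move=> y; rewrite in_nil.
  by rewrite big_nil -e.
by rewrite l10 l20.
Qed.

Lemma li_mem (l1 l2 : seq V) x :
  (forall x, x \in l1 -> simple x) -> (forall x, x \in l2 -> simple x) ->
  \sum_(x <- l1) x = \sum_(x <- l2) x -> x \in l2 -> x \in l1.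
Proof.
move=> s1 s2 e; rewrite (perm_mem (li_perm (ltnSn _) s1 s2 e)) //.
Qed.

End Chamber.

Section Equiv.
Variables (R : realType) (n : nat) (Rt Q : seq 'rV[R]_n) (T : 'M[R]_n) (H : 'rV[R]_n).
Hypothesis RS : root_system Rt.
Hypothesis PQ : parabolic_set Rt Q.
Hypothesis TT : T *m T = 1%:M.
Hypothesis Troot : forall a, a \in Rt -> a *m T \in Rt.
Hypothesis fitH : fit Rt Q H.
Local Notation V := 'rV[R]_n.
Local Notation simple := (simple_root Rt H).

Let reg : regular Rt H. Proof. by case: fitH. Qed.

Lemma TTK (a : V) : a *m T *m T = a.
Proof. by rewrite -mulmxA TT mulmx1. Qed.

Lemma pos_inQ a : a \in Rt -> 0 < dotv a H -> a \in Q.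
Proof. by case: fitH => _ h aR ap; apply: h. Qed.

Lemma negQ_split b c : b \in Rt -> c \in Rt -> rpos H b -> rpos H c ->
  - (b + c) \in Q -> - b \in Q /\ - c \in Q.
Proof.
move=> bR cR bp cp hq; case: PQ => _ cl _.
split.
- have -> : - b = - (b + c) + c by rewrite opprD subrK.
  apply: cl => //; first exact: pos_inQ.
  by rewrite opprD subrK rt_neg.
- have -> : - c = - (b + c) + b by rewrite opprD addrAC addNr add0r.
  apply: cl => //; first exact: pos_inQ.
  by rewrite opprD addrAC addNr add0r rt_neg.
Qed.

Lemma decomp_list (ps : seq V) : (forall y, y \in ps -> y \in Rt /\ 0 < dotv y H) ->
  exists l, (forall x, x \in l -> simple x) /\ \sum_(y <- ps) y = \sum_(x <- l) x.
Proof.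
elim: ps => [|y ps IH] hps; first by exists [::]; split => // x; rewrite in_nil.
have [yR yp] := hps y (mem_head _ _).
have [l1 [s1 e1]] := decomp0 yR yp.
have [l2 [s2 e2]] : exists l, (forall x, x \in l -> simple x) /\ \sum_(y <- ps) y = \sum_(x <- l) x.
  by apply: IH => z zp; apply: hps; rewrite inE zp orbT.
exists (l1 ++ l2); split; last by rewrite big_cons big_cat /= -e1 -e2.
by move=> x; rewrite mem_cat => /orP [/s1|/s2].
Qed.

Lemma sum_mulT (l : seq V) : (\sum_(x <- l) x) *m T = \sum_(x <- l) x *m T.
Proof. exact: mulmx_suml. Qed.

Lemma claim_b : cond_b Rt Q T H -> forall g, g \in Rt -> 0 < dotv g H -> - g \in Q ->
  dotv (g *m T) H < 0 -> g *m T = - g.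
Proof.
move=> hb g gR gp gQ gn.
have [l [hl ge]] := @decomp _ _ Rt H (fun x => - x \in Q) negQ_split _ g (ltnSn _) gR gp gQ.
have hx : forall x, x \in l -> x *m T = - x \/ 0 < dotv (x *m T) H.
  move=> x xl; have [sx xQ] := hl x xl.
  have [h|h] := classic (x *m T = - x); [by left|right].
  by apply: hb => // -[_]; rewrite xQ.
have sl : forall x, x \in l -> simple x by move=> x /hl [].
have [[b0 [b0l b0n]]|nex] := classic (exists b0, b0 \in l /\ b0 *m T <> - b0); last first.
  rewrite ge sum_mulT -sumrN big_seq [RHS]big_seq; apply: eq_bigr => x xl.
  by apply: NNPP => hne; apply: nex; exists x.
exfalso.
pose I := [seq x <- l | x *m T == - x].
pose J := [seq x <- l | x *m T != - x].
have e1 : g *m T = \sum_(x <- I) (- x) + \sum_(x <- J) x *m T.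
  rewrite ge sum_mulT (bigID (fun x => x *m T == - x)) /= !big_filter.
  by congr (_ + _); apply: eq_bigr => x /eqP.
have eI : \sum_(x <- I) x = - (g *m T) + \sum_(x <- J) x *m T.
  by rewrite e1 sumrN opprD opprK subrK.
have b0J : b0 \in J by rewrite mem_filter b0l andbT; apply/eqP.
have b0p : 0 < dotv (b0 *m T) H by case: (hx b0 b0l).
have b0R : b0 \in Rt by apply: simple_in; apply: sl.
have [m0 [sm0 em0]] := decomp0 (Troot b0R) b0p.
pose ps := - (g *m T) :: [seq x *m T | x <- rem b0 J].
have [l' [sl' el']] : exists l, (forall x, x \in l -> simple x) /\ \sum_(y <- ps) y = \sum_(x <- l) x.
  apply: decomp_list => y; rewrite inE => /orP [/eqP ->|].
    by rewrite rt_neg ?Troot // dotvNl oppr_gt0.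
  move=> /mapP [x xr ->]; have xJ := mem_rem xr.
  move: xJ; rewrite mem_filter => /andP [xn xl].
  split; first by apply: Troot; apply: simple_in; apply: sl.
  by case: (hx x xl) => // /eqP; rewrite (negbTE xn).
have eS : \sum_(x <- I) x = \sum_(x <- m0 ++ l') x.
  rewrite eI big_cat /= -em0 -el' big_cons big_map (perm_big _ (perm_to_rem b0J)) big_cons.
  by rewrite addrA (addrC (- _)) addrA.
have sI : forall x, x \in I -> simple x by move=> x; rewrite mem_filter => /andP [_ /sl].
have sml : forall x, x \in m0 ++ l' -> simple x by move=> x; rewrite mem_cat => /orP [/sm0|/sl'].
have imag_m0 : forall y, y \in m0 -> y *m T = - y.
  move=> y ym; have : y \in I by apply: (li_mem RS reg sI sml eS); rewrite mem_cat ym.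
  by rewrite mem_filter => /andP [/eqP].
apply: b0n.
have : b0 = - (b0 *m T).
  rewrite -{1}(TTK b0) em0 sum_mulT -sumrN big_seq [RHS]big_seq.
  by apply: eq_bigr => y ym; rewrite imag_m0.
by move=> {1}->; rewrite mulNmx TTK.
Qed.

Lemma equiv_ab : cond_a Rt Q T H <-> cond_b Rt Q T H.
Proof.
split.
  move=> ha a sa nq ni; have aR := simple_in sa; have ap := simple_pos sa.
  have [//|an] := sign_rt reg (Troot aR).
  have [ar|nar] := classic (a *m T = a).
    by move: an; rewrite ar => an; move: (lt_trans ap an); rewrite ltxx.
  by case: nq; case: (ha a aR (conj nar ni) ap an).
move=> hb a aR [c1 c2] ap an; split.
  split; first exact: pos_inQ.
  by apply/negP => naQ; apply: c2; apply: claim_b.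
have gR : - (a *m T) \in Rt by rewrite rt_neg ?Troot.
have gp : 0 < dotv (- (a *m T)) H by rewrite dotvNl oppr_gt0.
split; first exact: pos_inQ.
rewrite opprK; apply/negP => aTQ; apply: c2.
have := claim_b hb gR gp; rewrite opprK => /(_ aTQ).
rewrite mulNmx TTK dotvNl oppr_lt0 => /(_ ap) /eqP.
by rewrite /rbar eq_sym => /eqP.
Qed.

End Equiv.

Section Reflect.
Variables (R : realType) (n : nat) (Rt Q : seq 'rV[R]_n) (T : 'M[R]_n).
Hypothesis RS : root_system Rt.
Hypothesis PQ : parabolic_set Rt Q.
Hypothesis TT : T *m T = 1%:M.
Hypothesis Troot : forall a, a \in Rt -> a *m T \in Rt.
Local Notation V := 'rV[R]_n.

Definition refl (b v : V) : V := v - (2 * dotv b v / dotv b b) *: b.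

Lemma refl_root b v : b \in Rt -> v \in Rt -> refl b v \in Rt.
Proof. by move=> bR vR; case: (rt_refl RS bR vR). Qed.

Lemma refl_dot b u v : dotv (refl b u) v = dotv u (refl b v).
Proof. rewrite /refl dotvBl dotvZl dotvBr dotvZr (dotvC u b); ring. Qed.

Lemma refl_N b v : refl b (- v) = - refl b v.
Proof. by rewrite /refl dotvNr mulrN mulNr scaleNr opprD. Qed.

Lemma refl_self b : b \in Rt -> refl b b = - b.
Proof.
move=> bR; rewrite /refl mulfK ?gt_eqF ?(rt_dot_gt0 RS) //.
by rewrite scaler_nat mulr2n opprD addrA subrr add0r.
Qed.

Lemma refl_invol b v : b \in Rt -> refl b (refl b v) = v.
Proof.
move=> bR; have bb := rt_dot_gt0 RS bR.
have hd : dotv b (refl b v) = - dotv b v.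
  rewrite /refl dotvBr dotvZr divfK ?gt_eqF //; ring.
rewrite {1}/refl hd /refl mulrN mulNr scaleNr opprK subrK //.
Qed.

Lemma sum_nseq (m : nat) (b : V) : \sum_(x <- nseq m b) x = b *+ m.
Proof. by elim: m => [|m IH]; rewrite ?big_nil // big_cons IH mulrS. Qed.

Lemma sum_const_l (l : seq V) b : (forall x, x \in l -> x = b) -> \sum_(x <- l) x = b *+ size l.
Proof.
elim: l => [|y l IH] h; first by rewrite big_nil.
rewrite big_cons IH /= ?mulrS ?(h y (mem_head _ _)) // => x xl.
by apply: h; rewrite inE xl orbT.
Qed.

Section Fixed.
Variable H : V.
Hypothesis reg : regular Rt H.
Local Notation simple := (simple_root Rt H).

Lemma refl_perm b g : simple b -> g \in Rt -> 0 < dotv g H -> g != b ->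
  0 < dotv (refl b g) H.
Proof.
move=> sb gR gp gb; have bR := simple_in sb; have bp := simple_pos sb.
have rR := refl_root bR gR.
have [//|rn] := sign_rt reg rR; exfalso.
have [ki _] := rt_refl RS bR gR.
set k := 2 * dotv b g / dotv b b in ki rn.
have kp : 0 < k.
  move: rn; rewrite /refl dotvBl dotvZl -/k => rn.
  rewrite ltNge; apply/negP => kn.
  have : k * dotv b H <= 0 by rewrite pmulr_lle0.
  lra.
have : k \is a Num.nat by rewrite -intrEge0 // ltW.
move=> /natrP [m km].
have rnp : 0 < dotv (- refl b g) H by rewrite dotvNl oppr_gt0.
have [l1 [s1 e1]] := decomp0 (rt_neg RS rR) rnp.
have [l [sl el]] := decomp0 gR gp.
have sn : forall x, x \in nseq m b -> simple x.
  by move=> x; rewrite mem_nseq => /andP [_ /eqP ->].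
have slc : forall x, x \in l ++ l1 -> simple x.
  by move=> x; rewrite mem_cat => /orP [/sl|/s1].
have es : \sum_(x <- nseq m b) x = \sum_(x <- l ++ l1) x.
  rewrite sum_nseq big_cat /= -el -e1 /refl opprB addrC subrK -/k km.
  by rewrite scaler_nat.
have lb : forall x, x \in l -> x = b.
  move=> x xl; have : x \in nseq m b.
    by apply: (li_mem RS reg sn slc es); rewrite mem_cat xl.
  by rewrite mem_nseq => /andP [_ /eqP].
have gE : g = (size l)%:R *: b by rewrite el (sum_const_l lb) scaler_nat.
case: RS => _ _ _ /(_ b (size l)%:R bR); rewrite -gE => /(_ gR) [h1|h1].
  by move/eqP: gb; apply; rewrite gE h1 scale1r.
have := ler0n R (size l); rewrite h1; lra.
Qed.

End Fixed.

Definition Nc (H : V) := count (fun a => (0 < dotv a H) && (dotv (a *m T) H < 0)) Rt.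

Lemma refl_dotH b a H : dotv a (refl b H) = dotv (refl b a) H.
Proof. by rewrite refl_dot. Qed.

Lemma descent H b : fit Rt Q H -> simple_root Rt H b -> - b \in Q ->
  b *m T <> - b -> dotv (b *m T) H < 0 ->
  fit Rt Q (refl b H) /\ (Nc (refl b H) < Nc H)%N.
Proof.
move=> [reg fp] sb bQ bn bTn.
have bR := simple_in sb; have bp := simple_pos sb.
have TTK' (a : V) : a *m T *m T = a by rewrite -mulmxA TT mulmx1.
have back : forall a, a \in Rt -> 0 < dotv (refl b a) H -> refl b a != b -> 0 < dotv a H.
  move=> a aR ap ab; have := refl_perm reg sb (refl_root bR aR) ap ab.
  by rewrite refl_invol.
have reg' : regular Rt (refl b H).
  by move=> a aR; rewrite refl_dotH; apply: reg; apply: refl_root.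
split.
  split => // a aR; rewrite /rpos refl_dotH => ap.
  have [/eqP e|ne] := boolP (refl b a == b).
    by have := congr1 (refl b) e; rewrite refl_invol // refl_self // => ->.
  by apply: fp => //; apply: back.
apply: (count_ltP (x := b)) => //=.
- move=> a aR /andP []; rewrite !refl_dotH => ap aTn.
  have [/eqP e|ne] := boolP (refl b a == b).
    have aE : a = - b by have := congr1 (refl b) e; rewrite refl_invol // refl_self.
    exfalso; move: aTn; rewrite aE mulNmx refl_N dotvNl oppr_lt0.
    have nbR : - (b *m T) \in Rt by rewrite rt_neg ?Troot.
    have hne : - (b *m T) != b.
      by apply/eqP => h'; apply: bn; rewrite -(opprK (b *m T)) h'.
    have h0 : 0 < - dotv (b *m T) H by rewrite oppr_gt0.
    have := refl_perm reg sb nbR; rewrite dotvNl => /(_ h0 hne).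
    rewrite refl_N dotvNl oppr_gt0 => h3 h2.
    by move: (lt_trans h3 h2); rewrite ltxx.
  have apos := back a aR ap ne; rewrite apos /=.
  have aTR := Troot aR.
  have [aTp|//] := sign_rt reg aTR; exfalso.
  have [/eqP e2|ne2] := boolP (a *m T == b).
    have : a = b *m T by rewrite -e2 TTK'.
    by move=> aE; move: apos; rewrite aE => h; move: (lt_trans h bTn); rewrite ltxx.
  have := refl_perm reg sb aTR aTp ne2; move: aTn => h1 h2.
  by move: (lt_trans h1 h2); rewrite ltxx.
- by rewrite bp bTn.
- by rewrite refl_dotH refl_self // dotvNl oppr_gt0 ltNge ltW.
Qed.

End Reflect.

Section MainT.
Variables (R : realType) (n : nat) (Rt Q : seq 'rV[R]_n) (T : 'M[R]_n).
Hypothesis RS : root_system Rt.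
Hypothesis PQ : parabolic_set Rt Q.
Hypothesis TT : T *m T = 1%:M.
Hypothesis Troot : forall a, a \in Rt -> a *m T \in Rt.

Lemma exist_b N : forall H, fit Rt Q H -> (Nc Rt T H < N)%N ->
  exists H', fit Rt Q H' /\ cond_b Rt Q T H'.
Proof.
elim: N => [//|N IH] H fH cN.
have [hb|nb] := classic (cond_b Rt Q T H); first by exists H.
have [b [sb nq ni np]] : exists b, [/\ simple_root Rt H b, ~ in_Qn Q b,
    ~ is_imag_root T b & ~ rpos H (rbar T b)].
  apply: NNPP => hne; apply: nb => a sa nq ni; apply: NNPP => np; apply: hne.
  by exists a; split.
have bQ : - b \in Q.
  case: (boolP (- b \in Q)) => // h; exfalso; apply: nq; split => //.
  by case: fH => _ fp; apply: fp; [exact: (simple_in sb)|exact: (simple_pos sb)].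
have reg : regular Rt H by case: fH.
have bTn : dotv (b *m T) H < 0.
  by case: (sign_rt reg (Troot (simple_in sb))) => // h; case: np.
have [fH' cN'] := descent RS TT Troot fH sb bQ ni bTn.
by apply: (IH _ fH'); apply: leq_trans cN' _; rewrite -ltnS.
Qed.

Lemma main_T : (forall H, fit Rt Q H -> (cond_a Rt Q T H <-> cond_b Rt Q T H)) /\
  exists H', [/\ fit Rt Q H', cond_a Rt Q T H' & cond_b Rt Q T H'].
Proof.
have eqv H : fit Rt Q H -> (cond_a Rt Q T H <-> cond_b Rt Q T H).
  by move=> fH; apply: equiv_ab.
split => //.
have [H0 [reg0 p0]] : exists H, regular Rt H /\ (forall a, a \in Rt -> rpos H a -> a \in Q).
  by case: PQ.
have fH0 : fit Rt Q H0 by split.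
have [H' [fH' hb]] := exist_b fH0 (ltnSn (Nc Rt T H0)).
by exists H'; split => //; apply/(eqv _ fH').
Qed.

End MainT.

Unset Implicit Arguments.
Set Strict Implicit.

Theorem lemma4p3 (R : realType) (n : nat) (Rt Q : seq 'rV[R]_n)
    (S : 'M[R]_n) :
  root_system Rt -> conj_invol Rt S -> parabolic_set Rt Q ->
  [/\ (forall H : 'rV[R]_n, fit Rt Q H ->
         (cond_a Rt Q S H <-> cond_b Rt Q S H) /\
         (cond_c Rt Q S H <-> cond_d Rt Q S H)),
      (exists H' : 'rV[R]_n, [/\ fit Rt Q H', cond_a Rt Q S H' & cond_b Rt Q S H']) &
      (exists H'' : 'rV[R]_n, [/\ fit Rt Q H'', cond_c Rt Q S H'' & cond_d Rt Q S H''])].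
Proof.
move=> RS [SS _ Sroot] PQ.
have SS' : (- S) *m (- S) = 1%:M by rewrite mulNmx mulmxN opprK.
have Sroot' : forall a, a \in Rt -> a *m (- S) \in Rt.
  by move=> a aR; rewrite mulmxN rt_neg ?Sroot.
have mN : forall a : 'rV[R]_n, a *m - S = - (a *m S) by move=> a; apply: mulmxN.
have [eq1 [H1 [f1 a1 b1]]] := main_T RS PQ SS Sroot.
have [eq2 [H2 [f2 a2 b2]]] := main_T RS PQ SS' Sroot'.
have ca H : cond_c Rt Q S H <-> cond_a Rt Q (- S) H.
  rewrite /cond_c /cond_a /rbar /is_cpx_root /rpos /rneg.
  split=> h a aR [c1 c2] ap an.
    rewrite mulmxN opprK; apply: h => //.
    - rewrite /rbar in c1 c2 *.
      by split => e; [apply: c2|apply: c1]; rewrite mulmxN e ?opprK.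
    - by move: an; rewrite mulmxN dotvNl oppr_lt0.
  have := h a aR; rewrite mulmxN opprK; apply => //.
  - rewrite /rbar in c1 c2 *.
    by split => e; [apply: c2|apply: c1]; rewrite -(opprK (a *m S)) -mulmxN e ?opprK.
  - by rewrite dotvNl oppr_lt0.
have db H : cond_d Rt Q S H <-> cond_b Rt Q (- S) H.
  rewrite /cond_d /cond_b /is_real_root /is_imag_root /rbar /rpos /rneg.
  split=> h a sa nq nr.
    rewrite mN dotvNl oppr_gt0; apply: h => // e; apply: nr.
    by rewrite mN e.
  have := h a sa nq; rewrite mN dotvNl oppr_gt0; apply => e; apply: nr.
  by move/eqP: e; rewrite eqr_opp => /eqP.
split.
- move=> H fH; split; first exact: eq1.
  rewrite ca db; exact: eq2.
- by exists H1.
- by exists H2; split => //; [apply/ca|apply/db].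
Qed.
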